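(* Fix a state $s$. Let $\pi^t_s\in\Delta(\mathscr{A})\cap\operatorname{rint}\operatorname{dom}h$, let $\widehat Q^t_s,\widehat Q^{t-1}_s\in\mathbb{R}^{\mathscr{A}}$ be arbitrary vectors and $\eta^{t-1},\eta^t>0$. Let $$\tilde\pi_s=\arg\min_{\pi_s\in\Delta(\mathscr{A})}-\langle\widehat Q^t_s-\widehat Q^{t-1}_s,\pi_s\rangle+\tfrac1{\eta^{t-1}}D_h(\pi_s,\pi^t_s),$$ and define the Lazy PMD(+correction) objective $F_{\mathrm{lzc}}(\pi_s)=-\langle\widehat Q^t_s,\pi_s\rangle+\frac1{\eta^t}D_h(\pi_s,\tilde\pi_s)$ and the Lazy PMD(+momentum) objective $F_{\mathrm{mom}}(\pi_s)=-\langle\widehat Q^t_s+\frac{\eta^{t-1}}{\eta^t}(\widehat Q^t_s-\widehat Q^{t-1}_s),\pi_s\rangle+\frac1{\eta^t}D_h(\pi_s,\pi^t_s)$. Then for every $\pi_s\in\Delta(\mathscr{A})\cap\operatorname{dom}h$, $$F_{\mathrm{lzc}}(\pi_s)-F_{\mathrm{lzc}}(\tilde\pi_s)\ \le\ F_{\mathrm{mom}}(\pi_s)-F_{\mathrm{mom}}(\tilde\pi_s).$$ (This is the sense in which the solutions of Lazy PMD(+momentum) subsume those of Lazy PMD(+correction).)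
   Context: $\mathscr{A}$ is a finite action set and $\langle\cdot,\cdot\rangle$ the dot product on $\mathbb{R}^{\mathscr{A}}$. The mirror map $h:\mathbb{R}^{\mathscr{A}}\to\mathbb{R}\cup\{+\infty\}$ is of Legendre type (strictly convex and essentially smooth on $\operatorname{rint}\operatorname{dom}h$) with $\Delta(\mathscr{A})\cap\operatorname{rint}\operatorname{dom}h\neq\emptyset$; its Bregman divergence is $D_h(x,y)=h(x)-h(y)-\langle\nabla h(y),x-y\rangle$ for $x\in\operatorname{dom}h$, $y\in\operatorname{rint}\operatorname{dom}h$. For $q\in\mathbb{R}^{\mathscr{A}}$, $y\in\Delta(\mathscr{A})\cap\operatorname{rint}\operatorname{dom}h$ and $\eta>0$, the problem $\arg\min_{\pi\in\Delta(\mathscr{A})}-\langle q,\pi\rangle+\frac1\eta D_h(\pi,y)$ has a unique minimizer, lying in $\operatorname{rint}\operatorname{dom}h$. *)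

(* Defs.v *)
From mathcomp Require Import all_boot all_order all_algebra all_classical all_reals all_analysis.
Import numFieldNormedType.Exports.
Import Order.TTheory GRing.Theory Num.Theory.
Set Implicit Arguments. Unset Strict Implicit. Unset Printing Implicit Defensive.
Local Open Scope classical_set_scope.
Local Open Scope ring_scope.

(* The finite action set is 'I_n; R^A is represented by row vectors 'rV[R]_n
   (which carry MathComp-Analysis' normed-space structure). *)
Section Defs.
Variables (R : realType) (n : nat).
Implicit Types (u v x y : 'rV[R]_n) (h : 'rV[R]_n -> \bar R).

Definition dot u v : R := \sum_(i < n) u 0 i * v 0 i.

Definition simplex : set 'rV[R]_n :=
  [set p | (forall i, 0 <= p 0 i) /\ \sum_(i < n) p 0 i = 1].

Definition dom h : set 'rV[R]_n := [set x | (h x < +oo)%E].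

(* interior of the domain (for an essentially smooth h, rint dom h = int dom h) *)
Definition intdom h : set 'rV[R]_n := interior (dom h).

Definition grad h y : 'rV[R]_n :=
  \row_j ('d (fun x => fine (h x)) y : 'rV[R]_n -> R) (delta_mx 0 j).

(* Bregman divergence D_h(x, y) = h x - h y - <grad h y, x - y>,
   for x in dom h and y in int dom h (where h x, h y are finite) *)
Definition Dh h x y : R := fine (h x) - fine (h y) - dot (grad h y) (x - y).

(* Legendre type (Rockafellar, Sec. 26): closed proper convex, strictly convex
   and essentially smooth on the interior of its domain. *)
Definition proper_fun h : Prop :=
  (forall x, h x != -oo%E) /\ (exists x, dom h x).

Definition convex_ext h : Prop :=
  forall x y (l : R), 0 < l < 1 ->
    (h (l *: x + (1 - l) *: y)%R <= l%:E * h x + (1 - l)%R%:E * h y)%E.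

Definition lsc_ext h : Prop :=
  forall x (a : R), (a%:E < h x)%E -> \forall y \near x, (a%:E < h y)%E.

Definition strictly_convex_on h (D : set 'rV[R]_n) : Prop :=
  forall x y (l : R), D x -> D y -> x != y -> 0 < l < 1 ->
    (h (l *: x + (1 - l) *: y)%R < l%:E * h x + (1 - l)%R%:E * h y)%E.

Definition essentially_smooth h : Prop :=
  [/\ intdom h !=set0,
      (forall y, intdom h y -> differentiable (fun x => fine (h x)) y) &
      (forall x, closure (intdom h) x -> ~ intdom h x ->
         (fun y => `|grad h y|) @ within (intdom h) (nbhs x) --> +oo)].

Definition legendre h : Prop :=
  [/\ proper_fun h, convex_ext h, lsc_ext h,
      strictly_convex_on h (intdom h) & essentially_smooth h].

Definition md_obj h (q : 'rV[R]_n) (eta : R) y (p : 'rV[R]_n) : R :=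
  - dot q p + eta^-1 * Dh h p y.

(* p is the (unique, by the standing assumptions) minimizer of md_obj over
   Delta(A) (the objective is +oo off dom h) *)
Definition is_md_argmin h (q : 'rV[R]_n) (eta : R) y (p : 'rV[R]_n) : Prop :=
  [/\ simplex p, dom h p &
      forall p', simplex p' -> dom h p' -> md_obj h q eta y p <= md_obj h q eta y p'].

End Defs.

(* Main.v *)
Require Import Defs.
From mathcomp Require Import all_boot all_order all_algebra all_classical all_reals all_analysis.
From mathcomp Require Import ring.
From mathcomp Require Import lra.
Import numFieldNormedType.Exports.
Import Order.TTheory GRing.Theory Num.Theory.
Local Open Scope classical_set_scope.
Local Open Scope ring_scope.

Section L.
Variables (R : realType) (n : nat).
Implicit Types (u v x y : 'rV[R]_n).
Lemma dotDr u x y : dot u (x + y) = dot u x + dot u y.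
Proof. by rewrite /dot -big_split; apply: eq_bigr => i _; rewrite mxE mulrDr. Qed.
Lemma dotDl u x y : dot (x + y) u = dot x u + dot y u.
Proof. by rewrite /dot -big_split; apply: eq_bigr => i _; rewrite mxE mulrDl. Qed.
Lemma dotZr a u x : dot u (a *: x) = a * dot u x.
Proof. by rewrite /dot mulr_sumr; apply: eq_bigr => i _; rewrite mxE mulrCA. Qed.
Lemma dotZl a u x : dot (a *: x) u = a * dot x u.
Proof. by rewrite /dot mulr_sumr; apply: eq_bigr => i _; rewrite mxE mulrA. Qed.
Lemma dotNr u x : dot u (- x) = - dot u x.
Proof. by rewrite -scaleN1r dotZr mulN1r. Qed.
Lemma dotNl u x : dot (- x) u = - dot x u.
Proof. by rewrite -scaleN1r dotZl mulN1r. Qed.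
Lemma dotB u x y : dot u (x - y) = dot u x - dot u y.
Proof. by rewrite dotDr dotNr. Qed.
Lemma dotBl u x y : dot (x - y) u = dot x u - dot y u.
Proof. by rewrite dotDl dotNl. Qed.
Lemma dot0r u : dot u 0 = 0.
Proof. by rewrite /dot big1 // => i _; rewrite mxE mulr0. Qed.
End L.
Arguments dotB {R n}. Arguments dotBl {R n}. Arguments dotDl {R n}. Arguments dotDr {R n}. Arguments dotZl {R n}. Arguments dotZr {R n}. Arguments dot0r {R n}. Arguments dotNl {R n}. Arguments dotNr {R n}.

Lemma dgrad (R : realType) (n : nat) (h : 'rV[R]_n -> \bar R) y v :
  'd (fun x => fine (h x)) y v = dot (grad h y) v.
Proof.
rewrite [in LHS](row_sum_delta v) linear_sum /dot.
apply: eq_bigr => i _; rewrite linearZ /= mxE mulrC.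
by [].
Qed.

Theorem proposition4 (R : realType) (n : nat) (h : 'rV[R]_n -> \bar R)
  (h_leg : legendre h)
  (h_dom : exists p, simplex p /\ intdom h p)
  (pit Qt Qt1 : 'rV[R]_n) (eta1 eta : R)
  (pit_simplex : simplex pit) (pit_int : intdom h pit)
  (eta1_gt0 : 0 < eta1) (eta_gt0 : 0 < eta)
  (ptil : 'rV[R]_n)
  (ptil_min : is_md_argmin h (Qt - Qt1) eta1 pit ptil)
  (ptil_int : intdom h ptil) :
  let F_lzc := md_obj h Qt eta ptil in
  let F_mom := md_obj h (Qt + (eta1 / eta) *: (Qt - Qt1)) eta pit in
  forall p, simplex p -> dom h p ->
    F_lzc p - F_lzc ptil <= F_mom p - F_mom ptil.
Proof.
move=> F_lzc F_mom p [p0 p1] domp.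
case: ptil_min => [[pt0 pt1] _ ptmin].
case: h_leg => _ _ _ _ [_ hdiff _].
set f := fun x => fine (h x).
set v := p - ptil.
set d := Qt - Qt1.
have df : differentiable f ptil by exact: hdiff.
set c := eta1 * dot d v + dot (grad h pit) v.
have key : c <= dot (grad h ptil) v.
  rewrite -dgrad -deriveE //.
  have := diff_derivable (v:=v) df => /cvg_ex [l Hl].
  have Hl' := Hl.
  rewrite /derive (cvg_lim _ Hl) //.
  apply: (cvgr_to_ge (cvg_dnbhs_at_right Hl)).
  have Hc : (fun t : R => t *: v + ptil) @ 0 --> ptil.
    rewrite -[X in _ --> X]add0r; apply: cvgD; last exact: cvg_cst.
    rewrite -[X in _ --> X](scale0r v); apply: cvgZl; exact: cvg_id.
  have Hdom : \forall t \near 0, dom h (t *: v + ptil) by exact: Hc.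
  near=> t.
  have t0 : 0 < t by near: t; exact: nbhs_right_gt.
  have t1 : t < 1 by near: t; exact: nbhs_right_lt.
  have dt : dom h (t *: v + ptil).
    near: t; rewrite /at_right /within; apply: filterS Hdom => x Hx _; exact: Hx.
  have sx : simplex (t *: v + ptil).
    split.
      move=> i; rewrite !mxE; have := p0 i; have := pt0 i; nra.
    under eq_bigr => i _ do rewrite !mxE.
    by rewrite big_split /= -mulr_sumr sumrB p1 pt1 subrr mulr0 add0r.
  have H := ptmin _ sx dt.
  move: H; rewrite /md_obj /Dh /= -/f.
  rewrite !dotDr !dotNr !dotZr.
  rewrite /c /= ler_pdivlMl //.
  have ei : 0 < eta1^-1 by rewrite invr_gt0.
  have ee : eta1 * eta1^-1 = 1 by rewrite mulfV // gt_eqF.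
  move=> H; rewrite /f /d in H *.
  have H2 : t * dot (Qt - Qt1) v <= eta1^-1 * (fine (h (t *: v + ptil)) - fine (h ptil) - t * dot (grad h pit) v) by lra.
  have := ler_wpM2l (ltW eta1_gt0) H2; rewrite mulVKf ?gt_eqF // => H3; rewrite mulrDr mulrCA; lra.
rewrite /F_lzc /F_mom /md_obj /Dh.
move: key; rewrite /c /v.
move: (grad h ptil) (grad h pit) => gpt gpi.
have E0 : dot gpt (ptil - ptil) = 0 by rewrite subrr dot0r.
rewrite E0.
rewrite (dotB gpi p pit) (dotB gpi ptil pit) (dotB gpi p ptil).
rewrite (dotB d p ptil) /d (dotBl p Qt Qt1) (dotBl ptil Qt Qt1).
rewrite (dotDl p Qt) (dotDl ptil Qt) (dotZl _ p) (dotZl _ ptil) (dotBl p Qt Qt1) (dotBl ptil Qt Qt1).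
move: (dot gpt (p - ptil)) => G.
move: (dot Qt p) (dot Qt ptil) (dot Qt1 p) (dot Qt1 ptil) => a b c1 d1.
move: (dot gpi p) (dot gpi ptil) (dot gpi pit) => g1 g2 g3.
move: (fine (h p)) (fine (h ptil)) (fine (h pit)) => x y z.
have ei : 0 < eta^-1 by rewrite invr_gt0.
have ee : eta * eta^-1 = 1 by rewrite mulfV // gt_eqF.
move: (eta^-1) ei ee => k ei ee K.

have : 0 <= k * (G - (eta1 * (a - c1 - (b - d1)) + (g1 - g2))) by apply: mulr_ge0; [exact: ltW | rewrite subr_ge0].
move=> HH; rewrite -subr_ge0; match goal with |- is_true (0 <= ?E) => have -> : E = k * (G - (eta1 * (a - c1 - (b - d1)) + (g1 - g2))) by ring end; exact: HH.
Unshelve. all: end_near.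
Qed.
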